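(* Let $n_0$ be a sufficiently large universal constant. If $n \ge n_0$ and $\beta = 8 n$, then $|\mathcal{G}_{2n,\beta}| \ge 2^{n^2/2}$.
   Context: Fix disjoint vertex sets $L,R$ with $|L|=|R|=n$ and a fixed perfect matching $M$ of directed edges from $L$ to $R$. $\mathcal{G}_{2n}$ is the set of all unweighted directed graphs on vertex set $L\cup R$ whose set of edges from $L$ to $R$ is exactly $M$, whose edges from $R$ to $L$ form an arbitrary subset of $R\times L$, and which have no other edges (so $|\mathcal{G}_{2n}|=2^{n^2}$). A directed graph (with unit weights) is $\beta$-balanced if it is strongly connected and for every $\varnothing\ne S\subsetneq V$ the number of edges leaving $S$ is at most $\beta$ times the number of edges entering $S$. $\mathcal{G}_{2n,\beta}\subseteq\mathcal{G}_{2n}$ is the subset of $\beta$-balanced graphs. *)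

(* Defs.v *)
From mathcomp Require Import all_boot all_fingroup.
Set Implicit Arguments. Unset Strict Implicit. Unset Printing Implicit Defensive.

Section DiGraph.
Variable T : finType.
Variable e : rel T.

Definition strongly_connected : bool := [forall u, forall v, connect e u v].

Definition out_deg (S : {set T}) : nat :=
  #|[set p : T * T | [&& e p.1 p.2, p.1 \in S & p.2 \notin S]]|.

Definition in_deg (S : {set T}) : nat :=
  #|[set p : T * T | [&& e p.1 p.2, p.1 \notin S & p.2 \in S]]|.

(* beta-balanced (unit weights) *)
Definition balanced (beta : nat) : bool :=
  strongly_connected &&
  [forall S : {set T}, ((S != set0) && (S != setT)) ==>
                       (out_deg S <= beta * in_deg S)].
End DiGraph.

(* Vertex set L \cup R with L = inl 'I_n, R = inr 'I_n. *)
Definition Vtx (n : nat) : finType := ('I_n + 'I_n)%type.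

(* The graph of G_{2n} determined by the perfect matching sigma
   (edges inl i -> inr (sigma i)) and the set B of R-to-L edges
   ((j, i) \in B  iff  edge inr j -> inl i). *)
Definition gedge (n : nat) (sigma : 'S_n) (B : {set 'I_n * 'I_n}) : rel (Vtx n) :=
  fun u v =>
    match u, v with
    | inl i, inr j => sigma i == j
    | inr j, inl i => (j, i) \in B
    | _, _ => false
    end.

Definition count_balanced (n : nat) (sigma : 'S_n) (beta : nat) : nat :=
  #|[set B : {set 'I_n * 'I_n} | balanced (gedge sigma B) beta]|.

(* Main.v *)
Require Import Defs.
From mathcomp Require Import all_boot all_fingroup zify.
Set Implicit Arguments. Unset Strict Implicit. Unset Printing Implicit Defensive.

Lemma card_setU_le (T : finType) (A B : {set T}) : #|A :|: B| <= #|A| + #|B|.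
Proof. by rewrite cardsU leq_subr. Qed.

Lemma card_lt_ord n k : k <= n -> #|[set i : 'I_n | i < k]| = k.
Proof.
move=> kn.
have -> : [set i : 'I_n | i < k] = [set widen_ord kn j | j in [set: 'I_k]].
  apply/setP=> i; rewrite !inE; apply/idP/imsetP.
    by move=> ik; exists (Ordinal ik); rewrite ?inE //; apply: val_inj.
  by case=> j _ ->; rewrite /= ltn_ord.
rewrite card_imset ?cardsT ?card_ord //.
by move=> a b /(congr1 val) /= /val_inj.
Qed.

Section CoreS.
Variable n : nat.
Hypothesis hn : 2 <= n.
Definition half (i : 'I_n) : bool := i < n./2.

Lemma cardP : #|[set i : 'I_n | half i]| = n./2.
Proof. apply: card_lt_ord; rewrite -{2}(odd_double_half n); lia. Qed.

Lemma cardQ : #|[set i : 'I_n | ~~ half i]| = n - n./2.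
Proof.
have := cardsC [set i : 'I_n | half i]; rewrite cardP card_ord.
have -> : ~: [set i : 'I_n | half i] = [set i | ~~ half i].
  by apply/setP=> i; rewrite !inE.
by move=> h; apply/eqP; rewrite -(eqn_add2l n./2) h subnKC // leq_half_double; lia.
Qed.

Variables Y X : {set 'I_n}.
Definition I1 := [set i | (i \in X) && (i \notin Y)].
Definition I2 := [set p : 'I_n * 'I_n | [&& p.1 \notin X, p.2 \in Y & half p.1 != half p.2]].
Definition O1 := [set i | (i \in Y) && (i \notin X)].
Definition O2 := [set p : 'I_n * 'I_n | (p.1 \in X) && (p.2 \notin Y)].

Hypothesis ne : (Y != set0) || (X != set0).
Hypothesis nf : (Y != setT) || (X != setT).

Lemma in_pos : 1 <= #|I1| + #|I2|.
Proof.
have [I10|] := eqVneq I1 set0; last by rewrite -card_gt0; lia.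
have [I20|] := eqVneq I2 set0; last by rewrite -card_gt0; lia.
have XY : forall i, i \in X -> i \in Y.
  move=> i iX; apply/negPn/negP=> iY.
  have : i \in I1 by rewrite inE iX iY.
  by rewrite I10 inE.
have H2 : forall a b, a \notin X -> b \in Y -> half a = half b.
  move=> a b aX bY; case: (boolP (half a == half b)) => [/eqP //| hab].
  have : (a, b) \in I2 by rewrite inE /= aX bY hab.
  by rewrite I20 inE.
case: (set_0Vmem Y) => [Y0|[b bY]].
  move: ne; rewrite Y0 eqxx /=; case/set0Pn=> i /XY.
  by rewrite Y0 inE.
case: (boolP (X == setT)) => [/eqP XT|].
  move: nf; rewrite XT eqxx /= orbF; move/negP; case; apply/eqP/setP=> i.
  by rewrite inE; apply: XY; rewrite XT inE.
rewrite -properT => /properP [_ [a _ aX]].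
have [c hc] : exists c : 'I_n, half c != half b.
  case hb: (half b).
    have lt : n.-1 < n by lia.
    exists (Ordinal lt); rewrite /half /=; rewrite -{2}(odd_double_half n).
    apply/negP; case: (odd n); lia.
  have lt : 0 < n by lia.
  exists (Ordinal lt); rewrite /half /=; rewrite -{1}(odd_double_half n).
  case: (odd n); lia.
have cX : c \in X.
  apply/negPn/negP=> cX; move: (H2 _ _ cX bY) => e; by rewrite e eqxx in hc.
have cY : c \notin Y.
  apply/negP=> cY; move: (H2 _ _ aX cY) (H2 _ _ aX bY) => e1 e2.
  by rewrite -e1 e2 eqxx in hc.
have : c \in I1 by rewrite inE cX cY.
by rewrite I10 inE.
Qed.

Definition Cs (h : bool) := [set p : 'I_n * 'I_n | [&& p.1 \in X, p.1 \in Y, p.2 \notin X, p.2 \notin Y, half p.1 == h & half p.2 == h]].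

Lemma pair_l_inj (d : 'I_n) : injective (fun b : 'I_n => (b, d)).
Proof. by move=> a b [] . Qed.
Lemma pair_r_inj (d : 'I_n) : injective (fun b : 'I_n => (d, b)).
Proof. by move=> a b [] . Qed.

Lemma Cs_bound h : #|[set i | half i == h]| <= 2 * #|[set i | half i != h]| ->
  #|Cs h| <= 2 * n * (#|I1| + #|I2|).
Proof.
move=> hH.
case: (boolP [exists d, (d \in Y) && (half d != h)]).
  case/existsP=> d /andP [dY hd].
  have sub : Cs h \subset setX [set: 'I_n] [set b | (b, d) \in I2].
    apply/subsetP=> p; rewrite !inE => /and5P [_ _ p2X _ /andP [_ /eqP h2]].
    by rewrite p2X dY h2 eq_sym hd.
  have c2 : #|[set b | (b, d) \in I2]| <= #|I2|.
    rewrite -(card_imset _ (@pair_l_inj d)); apply: subset_leq_card.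
    by apply/subsetP=> x /imsetP [b]; rewrite inE => bI ->.
  have := subset_leq_card sub; rewrite cardsX cardsT card_ord.
  move: c2; set k := #|_|; nia.
move/existsPn=> nd.
case: (boolP [exists c, (c \notin X) && (half c != h)]).
  case/existsP=> c /andP [cX hc].
  have sub : Cs h \subset setX [set a | (c, a) \in I2] [set: 'I_n].
    apply/subsetP=> p; rewrite !inE => /and5P [_ p1Y _ _ /andP [/eqP h1 _]].
    by rewrite cX p1Y h1 hc.
  have c2 : #|[set a | (c, a) \in I2]| <= #|I2|.
    rewrite -(card_imset _ (@pair_r_inj c)); apply: subset_leq_card.
    by apply/subsetP=> x /imsetP [b]; rewrite inE => bI ->.
  have := subset_leq_card sub; rewrite cardsX cardsT card_ord.
  move: c2; set k := #|_|; nia.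
move/existsPn=> nc.
have subI : [set i | half i != h] \subset I1.
  apply/subsetP=> i; rewrite !inE => hi.
  move: (nd i) (nc i); rewrite hi !andbT negbK => nY iX; by rewrite iX nY.
have sub : Cs h \subset setX [set i | half i == h] [set i | half i == h].
  apply/subsetP=> p; rewrite !inE => /and5P [_ _ _ _ /andP [h1 h2]].
  by rewrite h1 h2.
have := subset_leq_card sub; rewrite cardsX.
have := subset_leq_card subI.
have : #|[set i | half i == h]| <= n by rewrite -[n in _ <= n]card_ord max_card.
move: hH; set a := #|[set i | half i == h]|; set b := #|[set i | half i != h]|.
move=> hab han hb hc.
have e1 : a * a <= n * a := leq_mul han (leqnn a).
have e2 : n * a <= n * (2 * b) := leq_mul (leqnn n) hab.
have e3 : n * (2 * b) <= n * (2 * #|I1|) by rewrite leq_mul2l leq_mul2l hb !orbT.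
nia.
Qed.

Definition swap (p : 'I_n * 'I_n) := (p.2, p.1).
Lemma swap_inj : injective swap.
Proof. by case=> a b [c d] [] -> ->. Qed.

Lemma out_bound : #|O1| + #|O2| <= 8 * n * (#|I1| + #|I2|).
Proof.
have t1 := in_pos.
have hO1 : #|O1| <= n by rewrite -[n in _ <= n]card_ord max_card.
set C1 := [set p : 'I_n * 'I_n | (p.1 \in X) && (p.1 \notin Y)].
set C2 := [set p : 'I_n * 'I_n | (p.2 \in X) && (p.2 \notin Y)].
set C3 := [set p : 'I_n * 'I_n | [&& p.1 \in Y, p.2 \notin X & half p.1 != half p.2]].
have sub : O2 \subset C1 :|: C2 :|: C3 :|: Cs true :|: Cs false.
  apply/subsetP=> -[a b]; rewrite !inE /= => /andP [aX bY].
  rewrite aX bY /= !andbT.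
  case: (boolP (a \in Y)) => aY //=; rewrite ?orbT //.
  case: (boolP (b \in X)) => bX //=; rewrite ?orbT //.
  case: (boolP (half a != half b)) => hab //=; rewrite ?orbT //.
  move: hab; rewrite negbK => /eqP hab; rewrite hab.
  by case: (half b); rewrite ?orbT.
have k1 : #|C1| <= #|I1| * n.
  have s1 : C1 \subset setX I1 [set: 'I_n].
    by apply/subsetP=> -[a b]; rewrite !inE /= andbT; exact: id.
  by have := subset_leq_card s1; rewrite cardsX cardsT card_ord.
have k2 : #|C2| <= n * #|I1|.
  have s1 : C2 \subset setX [set: 'I_n] I1.
    by apply/subsetP=> -[a b]; rewrite !inE /=; exact: id.
  by have := subset_leq_card s1; rewrite cardsX cardsT card_ord.
have k3 : #|C3| <= #|I2|.
  rewrite -(card_imset _ swap_inj); apply: subset_leq_card.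
  apply/subsetP=> x /imsetP [[a b]]; rewrite !inE /= => /and3P [aY bX hab] ->.
  by rewrite /swap /= aY bX eq_sym hab.
have hp := cardP; have hq := cardQ.
have eT : [set i | half i == true] = [set i | half i] by apply/setP=> i; rewrite !inE eqb_id.
have eT' : [set i | half i != true] = [set i | ~~ half i] by apply/setP=> i; rewrite !inE eqb_id.
have eF : [set i | half i == false] = [set i | ~~ half i] by apply/setP=> i; rewrite !inE eqbF_neg.
have eF' : [set i | half i != false] = [set i | half i] by apply/setP=> i; rewrite !inE eqbF_neg negbK.
have k4 : #|Cs true| <= 2 * n * (#|I1| + #|I2|).
  apply: Cs_bound; rewrite eT eT' hp hq; rewrite -{2 3}(odd_double_half n); case: (odd n); lia.
have k5 : #|Cs false| <= 2 * n * (#|I1| + #|I2|).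
  apply: Cs_bound; rewrite eF eF' hp hq; rewrite -{1 2}(odd_double_half n); case: (odd n); lia.
have := subset_leq_card sub.
have u := card_setU_le.
have := u _ (C1 :|: C2 :|: C3 :|: Cs true) (Cs false).
have := u _ (C1 :|: C2 :|: C3) (Cs true).
have := u _ (C1 :|: C2) C3.
have := u _ C1 C2.
nia.
Qed.
End CoreS.


Lemma card_disjU (T : finType) (A B : {set T}) :
  (forall x, x \in A -> x \in B -> False) -> #|A :|: B| = #|A| + #|B|.
Proof.
move=> H; rewrite cardsU.
have -> : A :&: B = set0.
  apply/setP=> x; rewrite !inE; apply/negbTE/negP=> /andP [xa xb]; exact: H xa xb.
by rewrite cards0 subn0.
Qed.

Section Graph.
Variable n : nat.
Hypothesis hn : 2 <= n.
Variable sigma : 'S_n.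

Definition Fset : {set 'I_n * 'I_n} :=
  [set p | half ((sigma^-1)%g p.1) != half p.2].

Variable B : {set 'I_n * 'I_n}.
Hypothesis FB : Fset \subset B.

Let e := gedge sigma B.

Definition fE (i : 'I_n) : Vtx n * Vtx n := (inl i, inr (sigma i)).
Definition gE (p : 'I_n * 'I_n) : Vtx n * Vtx n := (inr (sigma p.1), inl p.2).

Lemma fE_inj : injective fE.
Proof. by move=> a b [] ->. Qed.
Lemma gE_inj : injective gE.
Proof. by move=> [a b] [c d] [] /perm_inj -> ->. Qed.

Variable S : {set Vtx n}.
Definition Yof := [set i : 'I_n | (inl i : Vtx n) \in S].
Definition Xof := [set i : 'I_n | (inr (sigma i) : Vtx n) \in S].

Lemma in_lower : #|I1 Yof Xof| + #|I2 Yof Xof| <= in_deg e S.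
Proof.
rewrite -(card_imset _ fE_inj) -(card_imset _ gE_inj) -card_disjU.
  apply: subset_leq_card; apply/subsetP=> x.
  case/setUP=> /imsetP [y]; rewrite !inE.
    by move=> /andP [yX yY] ->; rewrite /= /e /= eqxx yX yY.
  move=> /and3P [y1 y2 hy] ->; rewrite /= /e /= y1 y2 andbT.
  rewrite andbT; apply: (subsetP FB); rewrite inE /= permK; exact: hy.
by move=> x /imsetP [y _ ->] /imsetP [z _].
Qed.

Lemma out_upper : out_deg e S <= #|O1 Yof Xof| + #|O2 Yof Xof|.
Proof.
apply: (@leq_trans #|fE @: O1 Yof Xof :|: gE @: O2 Yof Xof|).
  apply: subset_leq_card; apply/subsetP=> -[u v]; rewrite inE /= /e.
  case: u => u; case: v => v //=.
    case/and3P=> /eqP <- uS vS; rewrite inE; apply/orP; left.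
    by apply/imsetP; exists u; rewrite // !inE uS.
  case/and3P=> uvB uS vS; rewrite inE; apply/orP; right.
  apply/imsetP; exists ((sigma^-1)%g u, v); last by rewrite /gE /= permKV.
  by rewrite !inE /= permKV uS.
apply: leq_trans (card_setU_le _ _) _.
by apply: leq_add; apply: leq_imset_card.
Qed.

Hypothesis Sne : S != set0.
Hypothesis Snf : S != setT.

Lemma ne_YX : (Yof != set0) || (Xof != set0).
Proof.
case/set0Pn: Sne => -[i|j] hS.
  by apply/orP; left; apply/set0Pn; exists i; rewrite inE.
apply/orP; right; apply/set0Pn; exists ((sigma^-1)%g j); rewrite inE permKV //.
Qed.

Lemma nf_YX : (Yof != setT) || (Xof != setT).
Proof.
move: Snf; rewrite -properT => /properP [_ [[i|j] _ hS]].
  apply/orP; left; rewrite -properT; apply/properP; split; first exact: subsetT.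
  by exists i; rewrite ?inE.
apply/orP; right; rewrite -properT; apply/properP; split; first exact: subsetT.
by exists ((sigma^-1)%g j); rewrite ?inE ?permKV.
Qed.

Lemma in_pos_S : 1 <= in_deg e S.
Proof. exact: leq_trans (in_pos hn ne_YX nf_YX) in_lower. Qed.

Lemma bal_S : out_deg e S <= 8 * n * in_deg e S.
Proof.
apply: leq_trans out_upper _.
apply: leq_trans (out_bound hn ne_YX nf_YX) _.
by rewrite leq_mul2l in_lower orbT.
Qed.
End Graph.

Lemma bal_of n (hn : 2 <= n) (sigma : 'S_n) (B : {set 'I_n * 'I_n}) :
  Fset sigma \subset B -> balanced (gedge sigma B) (8 * n).
Proof.
move=> FB; apply/andP; split.
  apply/forallP=> u; apply/forallP=> v.
  set S := [set w | connect (gedge sigma B) w v].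
  have vS : v \in S by rewrite inE connect0.
  case: (boolP (S == setT)) => [/eqP ST|SnT].
    have : u \in S by rewrite ST inE. 
    by rewrite inE.
  have Sne : S != set0 by apply/set0Pn; exists v.
  have := in_pos_S hn FB Sne SnT.
  rewrite card_gt0 => /set0Pn [[x y]]; rewrite inE /= => /and3P [xy xS yS].
  move: yS xS; rewrite !inE => yv /negP []; exact: connect_trans (connect1 xy) yv.
apply/forallP=> S; apply/implyP=> /andP [Sne SnT].
exact: bal_S.
Qed.

Lemma count_ge n (hn : 2 <= n) (sigma : 'S_n) :
  2 ^ #|~: Fset sigma| <= count_balanced sigma (8 * n).
Proof.
rewrite -card_powerset.
set F := Fset sigma.
have inj : {in powerset (~: F) &, injective (fun C => C :|: F)}.
  move=> C C'; rewrite !inE => /subsetP hC /subsetP hC' E.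
  apply/setP=> x; move/setP: E => /(_ x); rewrite !in_setU.
  case: (boolP (x \in F)) => xF; last by rewrite !orbF.
  move=> _; apply/idP/idP => [/hC|/hC']; rewrite inE xF //.
rewrite -(card_in_imset inj); apply: subset_leq_card.
apply/subsetP=> B /imsetP [C _ ->]; rewrite inE.
by apply: bal_of => //; apply: subsetUr.
Qed.

Definition hE n (sigma : 'S_n) (p : 'I_n * 'I_n) := (sigma p.1, p.2).

Lemma cardFc n (hn : 2 <= n) (sigma : 'S_n) :
  n./2 * n./2 + (n - n./2) * (n - n./2) <= #|~: Fset sigma|.
Proof.
rewrite -(cardQ hn) -(cardP hn) -!cardsX.
rewrite -card_disjU; last first.
  by move=> [a b]; rewrite !inE /= => /andP [-> _] /andP [].
rewrite -(card_imset _ (f := hE sigma)); last by move=> [a b] [c d] [] /perm_inj -> ->.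
apply: subset_leq_card; apply/subsetP=> x /imsetP [[a b]].
rewrite !inE /= => H ->; rewrite /hE /= permK negbK.
by case/orP: H => /andP [h1 h2]; move: h1 h2; case: (half a); case: (half b).
Qed.

Theorem lemma5 :
  exists n0 : nat, forall n : nat, n0 <= n ->
    forall sigma : 'S_n, 2 ^ (n ^ 2) <= (count_balanced sigma (8 * n)) ^ 2.
Proof.
exists 2 => n hn sigma.
have c1 := count_ge hn sigma.
have c2 := cardFc hn sigma.
apply: (@leq_trans ((2 ^ #|~: Fset sigma|) ^ 2)); last by rewrite leq_exp2r.
rewrite -expnM; apply: leq_pexp2l => //.
have hq : n./2 <= n by rewrite -{2}(odd_double_half n); lia.
move: c2; set p := n./2; set k := #|_|.
have -> : n = p + (n - p) by lia.
set q := n - p.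
nia.
Qed.
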